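(* The $\mathbf k$-linear map $\varphi:\mathrm{WCQSym}\to\mathrm{QSym}$, defined by $\varphi(M_\alpha)=(-1)^{\ell_\varepsilon(\alpha)}M_{\bar\alpha}$ if $\alpha\in\mathcal C_N$ and $\varphi(M_\alpha)=0$ if $\alpha\in\mathcal C_\varepsilon$, is a coalgebra homomorphism, i.e. $\Delta_{\mathbb N}\circ\varphi=(\varphi\otimes\varphi)\circ\Delta_W$ and $\epsilon_{\mathbb N}\circ\varphi=\epsilon_W$.
   Context: $\tilde{\mathbb N}=\mathbb N\cup\{\varepsilon\}$ with $0+\varepsilon=\varepsilon+\varepsilon=\varepsilon$ and $n+\varepsilon=n$ for integers $n\ge1$. $\mathbf{k}$ is a commutative ring containing $\mathbb Q$; $\mathbf{k}[[X]]_{\tilde{\mathbb N}}$, $X=\{x_1<x_2<\cdots\}$, is the algebra of possibly infinite linear combinations of formal monomials $\prod x_i^{f(x_i)}$ with $f$ finitely supported $\tilde{\mathbb N}$-valued. An $\tilde{\mathbb N}$-composition is a finite (possibly empty) sequence of elements of $\{\varepsilon,1,2,\dots\}$; $M_{(\alpha_1,\dots,\alpha_k)}=\sum_{1\le i_1<\cdots<i_k}x_{i_1}^{\alpha_1}\cdots x_{i_k}^{\alpha_k}$, $M_\emptyset=1$. $\mathrm{WCQSym}$ is the free $\mathbf k$-module spanned by all $M_\alpha$, with coproduct $\Delta_W(M_{(\alpha_1,\dots,\alpha_k)})=\sum_{i=0}^kM_{(\alpha_1,\dots,\alpha_i)}\otimes M_{(\alpha_{i+1},\dots,\alpha_k)}$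 and counit $\epsilon_W(M_\alpha)=\delta_{\alpha,\emptyset}$; $\mathrm{QSym}$ is the span of the $M_\alpha$ with all entries positive integers, with coproduct $\Delta_{\mathbb N}$ and counit $\epsilon_{\mathbb N}$ given by the same formulas. $\ell_\varepsilon(\alpha)$ is the number of entries equal to $\varepsilon$, $\bar\alpha$ is $\alpha$ with its $\varepsilon$ entries deleted. $\mathcal C_\varepsilon$ is the set of $\tilde{\mathbb N}$-compositions with first entry $\varepsilon$, $\mathcal C_N$ the set of all others (including the empty one). *)

(* Defs.v *)
(* with multinomials' monoid-algebra [{malg R[K]}] used as
   the free R-module on a (choice) basis type K. *)
From HB Require Import structures.
From mathcomp Require Import all_boot all_order all_algebra.
From mathcomp Require Import finmap.
From mathcomp.multinomials Require Import monalg.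
Unset Strict Implicit. Unset Printing Implicit Defensive.
Import Order.TTheory GRing.Theory Num.Theory.
Local Open Scope ring_scope.

Definition pnat := {n : nat | (0 < n)%N}.
(* an entry of an N~-composition: None = epsilon, Some n = positive integer n *)
Definition entry := option pnat.
Definition eps : entry := None.
Definition wcomp := seq entry.
Definition qcomp := seq pnat.

Definition WCQSym (k : comUnitRingType) := {malg k[wcomp]}.
Definition QSym (k : comUnitRingType) := {malg k[qcomp]}.
(* tensor products of free modules = free modules on pairs of basis elements *)
Definition WCQSym2 (k : comUnitRingType) := {malg k[(wcomp * wcomp)%type]}.
Definition QSym2 (k : comUnitRingType) := {malg k[(qcomp * qcomp)%type]}.

Definition M {k : comUnitRingType} {B : choiceType} (a : B) : {malg k[B]} := << a >>.

Definition linext {k : comUnitRingType} {A B : choiceType}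
  (f : A -> {malg k[B]}) (x : {malg k[A]}) : {malg k[B]} :=
  \sum_(a <- msupp x) x@_a *: f a.
Definition linextk {k : comUnitRingType} {A : choiceType}
  (f : A -> k) (x : {malg k[A]}) : k :=
  \sum_(a <- msupp x) x@_a * f a.
Definition tens {k : comUnitRingType} {A B : choiceType}
  (x : {malg k[A]}) (y : {malg k[B]}) : {malg k[(A * B)%type]} :=
  \sum_(a <- msupp x) \sum_(b <- msupp y) (x@_a * y@_b) *: M (a, b).

Definition ell_eps (a : wcomp) : nat := count_mem eps a.
Definition bar (a : wcomp) : qcomp := pmap id a.
Definition in_Ceps (a : wcomp) : bool :=
  if a is x :: _ then x == eps else false.

Definition phiB (k : comUnitRingType) (a : wcomp) : QSym k :=
  if in_Ceps a then 0 else (-1) ^+ ell_eps a *: M (bar a).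
Definition phi (k : comUnitRingType) (x : WCQSym k) : QSym k := linext (phiB k) x.

Definition DeltaWB (k : comUnitRingType) (a : wcomp) : WCQSym2 k :=
  \sum_(i < (size a).+1) M (take i a, drop i a).
Definition DeltaNB (k : comUnitRingType) (a : qcomp) : QSym2 k :=
  \sum_(i < (size a).+1) M (take i a, drop i a).
Definition DeltaW (k : comUnitRingType) (x : WCQSym k) : WCQSym2 k := linext (DeltaWB k) x.
Definition DeltaN (k : comUnitRingType) (x : QSym k) : QSym2 k := linext (DeltaNB k) x.
Definition epsW (k : comUnitRingType) (x : WCQSym k) : k :=
  linextk (fun a : wcomp => (a == [::])%:R) x.
Definition epsN (k : comUnitRingType) (x : QSym k) : k :=
  linextk (fun a : qcomp => (a == [::])%:R) x.

Definition phi2 (k : comUnitRingType) (x : WCQSym2 k) : QSym2 k :=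
  linext (fun p : wcomp * wcomp => tens (phi k (M p.1)) (phi k (M p.2))) x.

(* Main.v *)
Require Import Defs.
From HB Require Import structures.
From mathcomp Require Import all_boot all_order all_algebra.
From mathcomp Require Import finmap.
From mathcomp.multinomials Require Import monalg.
Import GRing.Theory.
Local Open Scope fset_scope.
Local Open Scope ring_scope.

Section Lin.
Context {k : comUnitRingType} {A B : choiceType}.

Lemma linextEw (f : A -> {malg k[B]}) {x : {malg k[A]}} {d : {fset A}} :
  msupp x `<=` d -> linext f x = \sum_(a <- d) x@_a *: f a.
Proof.
move=> le; rewrite /linext [LHS](big_fset_incl _ le) => //= y yd /mcoeff_outdom ->.
by rewrite scale0r.
Qed.

Lemma linextD (f : A -> {malg k[B]}) x y : linext f (x + y) = linext f x + linext f y.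
Proof.
have h1 : msupp x `<=` msupp x `|` msupp y by apply: fsubsetUl.
have h2 : msupp y `<=` msupp x `|` msupp y by apply: fsubsetUr.
rewrite (linextEw f h1) (linextEw f h2) (linextEw f (msuppD_le x y)) -big_split /=.
by apply: eq_bigr => a _; rewrite mcoeffD scalerDl.
Qed.

Lemma linext0 (f : A -> {malg k[B]}) : linext f 0 = 0.
Proof. by rewrite /linext msupp0 big_nil. Qed.

Lemma linextZ (f : A -> {malg k[B]}) c x : linext f (c *: x) = c *: linext f x.
Proof.
rewrite (linextEw f (msuppZ_le c x)) /linext scaler_sumr.
by apply: eq_bigr => a _; rewrite mcoeffZ scalerA.
Qed.

Lemma linextM (f : A -> {malg k[B]}) a : linext f (M a) = f a.
Proof.
rewrite (linextEw f (@msuppU_le _ _ a 1)) big_seq_fset1 /M mcoeffUU.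
by rewrite scale1r.
Qed.

Lemma linext_sum (f : A -> {malg k[B]}) (I : Type) (r : seq I) (F : I -> {malg k[A]}) :
  linext f (\sum_(i <- r) F i) = \sum_(i <- r) linext f (F i).
Proof. exact: (big_morph (linext f) (linextD f) (linext0 f)). Qed.

Lemma linextkEw (f : A -> k) {x : {malg k[A]}} {d : {fset A}} :
  msupp x `<=` d -> linextk f x = \sum_(a <- d) x@_a * f a.
Proof.
move=> le; rewrite /linextk [LHS](big_fset_incl _ le) => //= y yd /mcoeff_outdom ->.
by rewrite mul0r.
Qed.

Lemma linextkD (f : A -> k) x y : linextk f (x + y) = linextk f x + linextk f y.
Proof.
have h1 : msupp x `<=` msupp x `|` msupp y by apply: fsubsetUl.
have h2 : msupp y `<=` msupp x `|` msupp y by apply: fsubsetUr.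
rewrite (linextkEw f h1) (linextkEw f h2) (linextkEw f (msuppD_le x y)) -big_split /=.
by apply: eq_bigr => a _; rewrite mcoeffD mulrDl.
Qed.

Lemma linextk0 (f : A -> k) : linextk f 0 = 0.
Proof. by rewrite /linextk msupp0 big_nil. Qed.

Lemma linextkZ (f : A -> k) c x : linextk f (c *: x) = c * linextk f x.
Proof.
rewrite (linextkEw f (msuppZ_le c x)) /linextk mulr_sumr.
by apply: eq_bigr => a _; rewrite mcoeffZ mulrA.
Qed.

Lemma linextkM (f : A -> k) a : linextk f (M a) = f a.
Proof.
rewrite (linextkEw f (@msuppU_le _ _ a 1)) big_seq_fset1 /M mcoeffUU.
by rewrite mul1r.
Qed.

Lemma linextk_sum (f : A -> k) (I : Type) (r : seq I) (F : I -> {malg k[A]}) :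
  linextk f (\sum_(i <- r) F i) = \sum_(i <- r) linextk f (F i).
Proof. exact: (big_morph (linextk f) (linextkD f) (linextk0 f)). Qed.

Lemma tens0l (y : {malg k[B]}) : tens (0 : {malg k[A]}) y = 0.
Proof. by rewrite /tens msupp0 big_nil. Qed.

Lemma tens0r (x : {malg k[A]}) : tens x (0 : {malg k[B]}) = 0.
Proof. by rewrite /tens msupp0 big1 // => a _; rewrite big_nil. Qed.

Lemma tensZM (c d : k) (u : A) (v : B) :
  tens (c *: (M u : {malg k[A]})) (d *: (M v : {malg k[B]})) = (c * d) *: M (u, v).
Proof.
have h1 : msupp (c *: (M u : {malg k[A]})) `<=` [fset u].
  by apply: fsubset_trans (msuppZ_le _ _) (@msuppU_le _ _ u 1).
have h2 : msupp (d *: (M v : {malg k[B]})) `<=` [fset v].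
  by apply: fsubset_trans (msuppZ_le _ _) (@msuppU_le _ _ v 1).
rewrite /tens (big_fset_incl _ h1); last first.
  by move=> a _ /mcoeff_outdom ->; apply: big1 => b _; rewrite mul0r scale0r.
rewrite big_seq_fset1 (big_fset_incl _ h2); last first.
  by move=> b _ /mcoeff_outdom ->; rewrite mulr0 scale0r.
by rewrite big_seq_fset1 !mcoeffZ /M !mcoeffUU !mulr1.
Qed.
End Lin.

Lemma key (V : zmodType) (F : qcomp * qcomp -> V) (a : wcomp) :
  \sum_(i < (size a).+1)
     (if in_Ceps (drop i a) then 0 else F (bar (take i a), bar (drop i a)))
  = \sum_(i < (size (bar a)).+1) F (take i (bar a), drop i (bar a)).
Proof.
elim: a F => [|x a IH] F.
  by rewrite !big_ord_recl !big_ord0.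
rewrite big_ord_recl /=.
under eq_bigr => i _ do rewrite add0n.
case: x => [p|] /=.
  rewrite [RHS]big_ord_recl.
  congr (_ + _).
  have := IH (fun q => F (p :: q.1, q.2)) => /= ->.
  by apply: eq_bigr => i _; rewrite add0n.
by rewrite add0r IH.
Qed.

Lemma notCeps_take (a : wcomp) (i : nat) : ~~ in_Ceps a -> ~~ in_Ceps (take i a).
Proof. by case: a => [|x a]; case: i. Qed.

Lemma phiB_sign (k : comUnitRingType) (a : wcomp) i : ~~ in_Ceps a ->
  tens (phiB k (take i a)) (phiB k (drop i a)) =
  if in_Ceps (drop i a) then 0
  else (-1) ^+ ell_eps a *: M (bar (take i a), bar (drop i a)).
Proof.
move=> na; rewrite /phiB (negbTE (@notCeps_take a i na)).
case: ifP => _; first by rewrite tens0r.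
rewrite tensZM -exprD; congr (_ ^+ _ *: _).
by rewrite /ell_eps -count_cat cat_take_drop.
Qed.

Lemma basisD (k : comUnitRingType) (a : wcomp) :
  DeltaN k (phiB k a) = phi2 k (DeltaWB k a).
Proof.
rewrite /phi2 /DeltaWB linext_sum.
under eq_bigr => i _ do rewrite linextM /phi !linextM /=.
case na: (in_Ceps a).
  rewrite /phiB na /DeltaN linext0; symmetry; apply: big1 => -[[|i] Hi] _ /=.
    by rewrite drop0 /phiB na tens0r.
  by case: a na Hi => // x a /= ->; rewrite tens0l.
under eq_bigr => i _ do rewrite (@phiB_sign k a i (negbT na)).
rewrite (@key _ (fun q => (-1) ^+ ell_eps a *: (M q : QSym2 k))).
by rewrite /phiB na /DeltaN linextZ linextM /DeltaNB scaler_sumr.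
Qed.

Lemma basisE (k : comUnitRingType) (a : wcomp) :
  epsN k (phiB k a) = (a == [::])%:R.
Proof.
rewrite /phiB /epsN; case: a => [|[p|] a] /=.
- by rewrite linextkZ linextkM expr0 mul1r.
- by rewrite linextkZ linextkM mulr0.
- by rewrite linextk0.
Qed.

Theorem lemma3p7 (k : comUnitRingType)
  (hQ : forall n : nat, (n.+1)%:R \is a @GRing.unit k) :
  (forall x : WCQSym k, DeltaN k (phi k x) = phi2 k (DeltaW k x)) /\
  (forall x : WCQSym k, epsN k (phi k x) = epsW k x).
Proof.
split=> x.
  rewrite /phi /DeltaW /linext /DeltaN -/(linext _ _) linext_sum.
  rewrite /phi2 -/(linext _ _) linext_sum; apply: eq_bigr => a _.
  by rewrite !linextZ; congr (_ *: _); exact: basisD.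
rewrite /phi /linext /epsN linextk_sum /epsW [RHS]/linextk; apply: eq_bigr => a _.
by rewrite linextkZ -(basisE k a).
Qed.
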